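(* For integers $n\ge 0$ and $p$ with $p\le n+1$, $$\sum_{j,k}\genfrac{[}{]}{0pt}{}{n}{k}\binom{k}{j}\genfrac{\{}{\}}{0pt}{}{j+1}{p}(-1)^j=\begin{cases}0,&(n+1>p)\\(-1)^n,&(n+1=p).\end{cases}$$
   Context: Here $\genfrac{[}{]}{0pt}{}{n}{k}$ denotes the unsigned (absolute) Stirling number of the first kind and $\genfrac{\{}{\}}{0pt}{}{n}{k}$ the ordinary Stirling number of the second kind (Knuth's notation), with $\genfrac{[}{]}{0pt}{}{0}{0}=\genfrac{\{}{\}}{0pt}{}{0}{0}=1$, $\genfrac{[}{]}{0pt}{}{n}{0}=\genfrac{\{}{\}}{0pt}{}{n}{0}=0$ for $n>0$, and $\genfrac{[}{]}{0pt}{}{n}{k}=\genfrac{\{}{\}}{0pt}{}{n}{k}=0$ for $0\le n<k$. The double sum is over all integers $j,k$ with $0\le j\le k\le n$. *)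

(* Defs.v *)
From mathcomp Require Import all_boot all_order all_algebra.
Set Implicit Arguments. Unset Strict Implicit. Unset Printing Implicit Defensive.
Import GRing.Theory Num.Theory.

Fixpoint stirling1 (n k : nat) : nat :=
  match n, k with
  | 0, 0 => 1
  | 0, _.+1 => 0
  | _.+1, 0 => 0
  | n'.+1, k'.+1 => n' * stirling1 n' k'.+1 + stirling1 n' k'
  end.

Fixpoint stirling2 (n k : nat) : nat :=
  match n, k with
  | 0, 0 => 1
  | 0, _.+1 => 0
  | _.+1, 0 => 0
  | n'.+1, k'.+1 => k'.+1 * stirling2 n' k'.+1 + stirling2 n' k'
  end.

Definition stirling2z (n : nat) (p : int) : nat :=
  match p with
  | Posz k => stirling2 n k
  | Negz _ => 0
  end.

(* Main.v *)
Require Import Defs.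
From mathcomp Require Import all_boot all_order all_algebra.
From mathcomp Require Import zify ring.
Import GRing.Theory Num.Theory.
Local Open Scope ring_scope.

Definition S2 (k : nat) (p : int) : int := (stirling2z k p)%:R.
Definition S1 (n k : nat) : int := (stirling1 n k)%:R.

Lemma S2rec k p : S2 k.+1 p = p * S2 k p + S2 k (p - 1).
Proof.
rewrite /S2; case: p => [[|m]|m].
- have -> : (Posz 0 - 1) = Negz 0 by [].
  by rewrite /= mul0r add0r.
- have -> : (Posz m.+1 - 1) = Posz m by lia.
  by rewrite /= natrD natrM natz.
- have -> : (Negz m - 1) = Negz m.+1 by lia.
  by rewrite /= mulr0 addr0.
Qed.

Lemma S2_0 p : S2 0 p = (p == 0)%:R.
Proof. by rewrite /S2; case: p => [[|m]|m]. Qed.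

Lemma stirling1_small n k : (n < k)%N -> stirling1 n k = 0%N.
Proof.
elim: n k => [|n IH] [|k] //= H.
by rewrite IH ?IH //; lia.
Qed.

Lemma binsum (a : nat -> int) k :
  \sum_(0 <= j < k.+2) 'C(k.+1, j)%:R * a j =
  \sum_(0 <= j < k.+1) 'C(k, j)%:R * a j + \sum_(0 <= j < k.+1) 'C(k, j)%:R * a j.+1.
Proof.
rewrite big_nat_recl // bin0.
under eq_bigr => j _ do rewrite binS natrD mulrDl.
rewrite big_split /= addrA; congr (_ + _).
rewrite [in RHS]big_nat_recl // bin0; congr (_ + _).
by rewrite big_nat_recr //= bin_small // mul0r addr0.
Qed.

Lemma Fsum k p :
  \sum_(0 <= j < k.+1) 'C(k, j)%:R * (S2 j.+1 p * (-1) ^+ j) = (-1) ^+ k * S2 k (p - 1).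
Proof.
elim: k p => [|k IH] p.
  rewrite big_nat1 bin0 !expr0 !mul1r mulr1 S2rec S2_0.
  by case: eqP => [->|]; rewrite ?mul0r ?mulr0 add0r.
have E j : 'C(k, j)%:R * (S2 j.+2 p * (-1) ^+ j.+1) =
    (- p) * ('C(k, j)%:R * (S2 j.+1 p * (-1) ^+ j)) +
    (-1) * ('C(k, j)%:R * (S2 j.+1 (p - 1) * (-1) ^+ j)) :> int.
  by rewrite S2rec exprS; ring.
rewrite binsum (eq_bigr _ (fun j _ => E j)) big_split /= -!mulr_sumr !IH.
rewrite [S2 k.+1 _]S2rec exprS.
have -> : p - 1 - 1 = p - 2 by ring.
ring.
Qed.

Lemma Hsum n (m : int) :
  \sum_(0 <= k < n.+1) S1 n k * ((-1) ^+ k * S2 k m) = (-1) ^+ n * (m == n%:Z)%:R.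
Proof.
elim: n m => [|n IH] m.
  by rewrite big_nat1 /S1 /= S2_0 !mul1r.
rewrite big_nat_recl // {1}/S1 /= mul0r add0r.
have E k : S1 n.+1 k.+1 * ((-1) ^+ k.+1 * S2 k.+1 m) =
   n%:R * (S1 n k.+1 * ((-1) ^+ k.+1 * S2 k.+1 m)) +
   (- m) * (S1 n k * ((-1) ^+ k * S2 k m)) + (-1) * (S1 n k * ((-1) ^+ k * S2 k (m - 1))).
  by rewrite /S1 /= natrD natrM S2rec exprS; ring.
rewrite (eq_bigr _ (fun k _ => E k)) !big_split /= -!mulr_sumr !IH.
have -> : \sum_(0 <= i < n.+1) S1 n i.+1 * ((-1) ^+ i.+1 * S2 i.+1 m) =
          (-1) ^+ n * (m == n%:Z)%:R - S1 n 0 * S2 0 m.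
  rewrite -IH [in RHS]big_nat_recl // big_nat_recr //= /S1 stirling1_small //.
  by rewrite mul0r addr0 expr0 mul1r addrAC subrr add0r.
have h0 : n%:R * S1 n 0 = 0 :> int by case: n {IH E} => [|n]; rewrite /S1 /= ?mul0r ?mulr0.
have -> : (m - 1 == n%:Z) = (m == n.+1%:Z) by apply/eqP/eqP; lia.
rewrite mulrBr [n%:R * (S1 n 0 * _)]mulrA h0 mul0r subr0 exprS.
case: (m =P n%:Z) => [->|Hm].
  have -> : (n%:Z == n.+1%:Z) = false by apply/eqP; lia.
  by rewrite /= natz ?mulr1 ?mulr0; ring.
by rewrite /= ?mulr0; ring.
Qed.

Theorem mainTheorem5 (n : nat) (p : int) (hp : p <= (n.+1)%:Z) :
  \sum_(0 <= k < n.+1) \sum_(0 <= j < k.+1)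
     ((stirling1 n k * 'C(k, j) * stirling2z j.+1 p)%:R * (-1) ^+ j : int)
  = (if p == (n.+1)%:Z then (-1) ^+ n else 0).
Proof.
have E k : \sum_(0 <= j < k.+1)
     ((stirling1 n k * 'C(k, j) * stirling2z j.+1 p)%:R * (-1) ^+ j : int)
   = S1 n k * ((-1) ^+ k * S2 k (p - 1)).
  rewrite -Fsum mulr_sumr; apply: eq_bigr => j _.
  by rewrite /S1 /S2 !natrM; ring.
rewrite (eq_bigr _ (fun k _ => E k)) Hsum.
have -> : (p - 1 == n%:Z) = (p == n.+1%:Z) by apply/eqP/eqP; lia.
by case: (p == n.+1%:Z); rewrite /= ?mulr1 ?mulr0.
Qed.
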